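(* Let $X\in\mathscr X(x,[0,T])$, $Y\in\mathscr X(y,[0,T])$, and let $\tau$ be a stopping time with $\tau\le T$. Then there exists a sequence $(\tau_n)$ of stopping times such that: $\tau\le\tau_n\le T$ for all $n$; on $\{\tau<T\}$ one has $\tau_n\downarrow\tau$ $\mathbb P$-a.s.; and on $\{\tau_n<T\}$ one has $\Delta X_{\tau_n}=\Delta Y_{\tau_n}=0$ $\mathbb P$-a.s.
   Context: Let $(\Omega,(\mathscr F_t)_{t\ge0},\mathscr F,\mathbb P)$ be a filtered probability space with right-continuous filtration and trivial $\mathscr F_0$, and $T>0$, $x,y\in\mathbb{R}$. $\mathscr X(z,[0,T])$ is the set of processes $(Z_t)_{t\ge0-}$ with $Z_{0-}=z$, $(Z_t)_{t\ge0}$ adapted, paths a.s. right-continuous and bounded, with finite and a.s. (uniformly) bounded total variation, and $Z_t=0$ a.s. for all $t\ge T$. $\Delta Z_t=Z_t-Z_{t-}$. *)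

(* Defs.v *)
From HB Require Import structures.
From mathcomp Require Import all_boot all_order all_algebra.
From mathcomp Require Import all_classical all_reals all_analysis.
Set Implicit Arguments. Unset Strict Implicit. Unset Printing Implicit Defensive.
Import Order.TTheory GRing.Theory Num.Theory numFieldNormedType.Exports.
Local Open Scope classical_set_scope.
Local Open Scope ring_scope.

Definition filtration {d} {Omega : measurableType d} {R : realType}
    (P : probability Omega R) (F : R -> set (set Omega)) : Prop :=
  [/\ (forall t, 0 <= t -> sigma_algebra setT (F t)),
      (forall t, 0 <= t -> F t `<=` measurable),
      (forall s t, 0 <= s -> s <= t -> F s `<=` F t),
      (forall t, 0 <= t -> (\bigcap_(s in `]t, +oo[) F s) `<=` F t) &
      (forall A, F 0 A -> P A = 0%E \/ P A = 1%E)].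

(* Stopping time (here real-valued, i.e. finite; all stopping times in the
   statement are bounded by T). *)
Definition stopping_time {d} {Omega : measurableType d} {R : realType}
    (F : R -> set (set Omega)) (tau : Omega -> R) : Prop :=
  (forall w, 0 <= tau w) /\
  (forall t, 0 <= t -> F t [set w | tau w <= t]).

(* A process (Z_t)_{t >= 0-}: Z_{0-} = z and Z : R -> Omega -> R gives Z_t for t >= 0
   (values at t < 0 are irrelevant). *)
Definition ext_path {Omega : Type} {R : realType} (z : R) (Z : R -> Omega -> R)
    (w : Omega) : R -> R :=
  fun s => if s < 0 then z else Z s w.

Definition left_val {Omega : Type} {R : realType} (z : R) (Z : R -> Omega -> R)
    (t : R) (w : Omega) : R :=
  if t <= 0 then z else lim ((fun s => Z s w) @ t^'-).

Definition jump {Omega : Type} {R : realType} (z : R) (Z : R -> Omega -> R)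
    (t : R) (w : Omega) : R :=
  Z t w - left_val z Z t w.

Definition procX {d} {Omega : measurableType d} {R : realType}
    (P : probability Omega R) (F : R -> set (set Omega))
    (z T : R) (Z : R -> Omega -> R) : Prop :=
  [/\
      (forall t, 0 <= t -> forall B : set R, measurable B -> F t (Z t @^-1` B)),
      {ae P, forall w, forall t, 0 <= t -> (fun s => Z s w) @ t^'+ --> Z t w},
      {ae P, forall w, exists M : R, forall t, 0 <= t -> `|Z t w| <= M},
      (* finite and a.s. uniformly bounded total variation on [0-, +oo) *)
      (exists K : R, {ae P, forall w, forall b : R,
          (total_variation (-1) b (ext_path z Z w) <= K%:E)%E}) &
      (forall t, T <= t -> {ae P, forall w, Z t w = 0})].

(* Main.v *)
Require Import Defs.
From HB Require Import structures.
From mathcomp Require Import all_boot all_order all_algebra.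
From mathcomp Require Import all_classical all_reals all_analysis.
From mathcomp Require Import lra measurable_realfun.
Import Order.TTheory GRing.Theory Num.Theory numFieldNormedType.Exports.
Local Open Scope classical_set_scope.
Local Open Scope ring_scope.
Set Implicit Arguments. Unset Strict Implicit. Unset Printing Implicit Defensive.

Section S.
Context d (Omega : measurableType d) (R : realType) (F : R -> set (set Omega)).

Lemma tau_meas (tau : Omega -> R) :
  (forall t, 0 <= t -> F t `<=` measurable) ->
  stopping_time F tau -> measurable_fun setT tau.
Proof.
move=> Fm [t0 tF].
apply: (measurability _ (measurable_realfun.RGenInftyO.measurableE R)) => //.
move=> _ [_ [x ->] <-].
rewrite setTI.
have -> : tau @^-1` `]-oo, x[ = \bigcup_n [set w | tau w <= x - n.+1%:R^-1].
  apply/seteqP; split => w /=.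
  - rewrite in_itv /= => tx.
    have [n nh] : exists n : nat, n.+1%:R^-1 < x - tau w.
      exists (Num.truncn (x - tau w)^-1).
      by rewrite invf_plt ?posrE ?subr_gt0// truncnS_gt.
    by exists n => //=; rewrite lerBrDr -lerBrDl ltW.
  - move=> [n _ /=] h; rewrite in_itv /=.
    by apply: (le_lt_trans h); rewrite ltrBlDr ltrDl invr_gt0 ltr0n.
apply: bigcupT_measurable => n.
have [h|h] := leP 0 (x - n.+1%:R^-1).
  exact: (Fm _ h _ (tF _ h)).
rewrite (_ : [set w | _] = set0) //.
apply/seteqP; split => w //= hw.
by have := le_trans (t0 w) hw; rewrite leNgt h.
Qed.
End S.


Section path.
Context {R : realType}.
Implicit Types (f g h : R -> R) (a b s : R).

Lemma mono_cvg g a b s : {in `[a, b] &, nondecreasing_fun g} -> a < s -> s < b ->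
  cvg (g x @[x --> s^'-]) /\ cvg (g x @[x --> s^'+]).
Proof.
move=> ndf ar rb; split.
apply: nondecreasing_at_left_is_cvgr.
- near=> t => x y xrs yrs xy; rewrite ndf//.
  + by apply: subset_itvW xrs; exact/ltW.
  + by apply: subset_itvW yrs; exact/ltW.
- near=> x; exists (g s) => _ /= [t srx <-]; rewrite ndf//.
  + by apply: subset_itvW srx; exact/ltW.
  + by apply: subset_itv_oo_cc; rewrite in_itv/= ar.
  + by move: srx; rewrite in_itv/= => /andP[_ /ltW].
apply: nondecreasing_at_right_is_cvgr.
- near=> t => x y xrs yrs xy; rewrite ndf//.
  + by apply: subset_itvW xrs; exact/ltW.
  + by apply: subset_itvW yrs; exact/ltW.
- near=> x; exists (g s) => _ /= [t srx <-]; rewrite ndf//.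
  + by apply: subset_itv_oo_cc; rewrite in_itv/= ar.
  + by apply: subset_itvW srx; exact/ltW.
  + by move: srx; rewrite in_itv/= => /andP[/ltW].
Unshelve. all: by end_near. Qed.

Lemma bv_parts f a b : a <= b -> bounded_variation a b f ->
  exists g h, [/\ {in `[a,b] &, nondecreasing_fun g},
     {in `[a,b] &, nondecreasing_fun h} & {in `[a,b], f =1 g \- h}].
Proof.
move=> ab bv.
exists (fine \o pos_tv a f), (fine \o neg_tv a f); split.
- by apply: fine_neg_tv_nondecreasing; exact: bounded_variationN.
- exact: fine_neg_tv_nondecreasing.
- exact: bounded_variation_pos_neg_tvE.
Qed.

Lemma bv_key f g h a b s : {in `[a,b] &, nondecreasing_fun g} ->
  {in `[a,b] &, nondecreasing_fun h} -> {in `[a,b], f =1 g \- h} ->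
  a < s -> s < b ->
  [/\ cvg (f x @[x --> s^'-]), cvg (f x @[x --> s^'+]) &
   (~ discontinuity g s -> ~ discontinuity h s ->
     lim (f x @[x --> s^'-]) = lim (f x @[x --> s^'+]))].
Proof.
move=> ndg ndh fE as_ sb.
have [cgl cgr] := mono_cvg ndg as_ sb.
have [chl chr] := mono_cvg ndh as_ sb.
have fl : f x @[x --> s^'-] --> lim (g x @[x --> s^'-]) - lim (h x @[x --> s^'-]).
  apply: cvg_trans; last exact: cvgB cgl chl.
  apply: near_eq_cvg; near=> y; rewrite fE //= in_itv /=; apply/andP; split.
    by near: y; apply: nbhs_left_ge.
  by apply/ltW/(lt_trans _ sb); near: y; apply: nbhs_left_lt.
have fr : f x @[x --> s^'+] --> lim (g x @[x --> s^'+]) - lim (h x @[x --> s^'+]).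
  apply: cvg_trans; last exact: cvgB cgr chr.
  apply: near_eq_cvg; near=> y; rewrite fE //= in_itv /=; apply/andP; split.
    by apply/ltW/(lt_trans as_); near: y; apply: nbhs_right_gt.
  by apply/ltW; near: y; apply: nbhs_right_lt.
split; [by apply/cvg_ex; eexists; exact: fl|by apply/cvg_ex; eexists; exact: fr|].
move=> dg dh.
rewrite (cvg_lim _ fl) // (cvg_lim _ fr) //.
have eg : lim (g x @[x --> s^'-]) = lim (g x @[x --> s^'+]).
  by apply: contrapT => ne; apply: dg; split => //; exact/eqP.
have eh : lim (h x @[x --> s^'-]) = lim (h x @[x --> s^'+]).
  by apply: contrapT => ne; apply: dh; split => //; exact/eqP.
by rewrite eg eh.
Unshelve. all: by end_near. Qed.


Lemma near_left_ex (P : R -> Prop) s : (\forall t \near s^'-, P t) ->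
  exists2 d, 0 < d & forall t, s - d < t -> t < s -> P t.
Proof.
move=> /nbhs_ballP [d /= d0 hd]; exists d => // t h1 h2.
apply: hd => //=; rewrite /ball /= gtr0_norm ?subr_gt0 //.
by rewrite ltrBlDr addrC -ltrBlDr.
Qed.

Lemma near_right_ex (P : R -> Prop) s : (\forall t \near s^'+, P t) ->
  exists2 d, 0 < d & forall t, s < t -> t < s + d -> P t.
Proof.
move=> /nbhs_ballP [d /= d0 hd]; exists d => // t h1 h2.
apply: hd => //=; rewrite /ball /= ltr0_norm ?subr_lt0 // opprB.
by rewrite ltrBlDl.
Qed.

Definition osc f s := exists e : rat, (0 : R) < ratr e /\ forall m : nat,
  exists q1 q2 : rat, [/\ s < ratr q1, ratr q1 < s + m.+1%:R^-1,
    s - m.+1%:R^-1 < ratr q2, ratr q2 < s &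
    ratr e <= `|f (ratr q1) - f (ratr q2)| ].

Lemma osc_disc f g h a b s : {in `[a,b] &, nondecreasing_fun g} ->
  {in `[a,b] &, nondecreasing_fun h} -> {in `[a,b], f =1 g \- h} ->
  a < s -> s < b -> osc f s -> discontinuity g s \/ discontinuity h s.
Proof.
move=> ndg ndh fE as_ sb [e [e0 he]].
have [cl cr E] := bv_key ndg ndh fE as_ sb.
apply: contrapT => /not_orP[dg dh].
have {}E := E dg dh.
set L := lim (f x @[x --> s^'+]) in E.
have e2 : 0 < ratr e / 2 :> R by rewrite divr_gt0.
have [d1 d10 h1] := near_left_ex ((cvgrPdist_lt _ _).1 cl _ e2).
have [d2 d20 h2] := near_right_ex ((cvgrPdist_lt _ _).1 cr _ e2).
have [m hm] : exists m : nat, m.+1%:R^-1 < Num.min d1 d2.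
  exists (Num.truncn (Num.min d1 d2)^-1).
  by rewrite invf_plt ?posrE ?lt_min ?d10 ?d20 // Num.Theory.truncnS_gt.
have [q1 [q2 [a1 b1 a2 b2 le12]]] := he m.
have := hm; rewrite lt_min => /andP[m1 m2].
have c1 : s + m.+1%:R^-1 < s + d2 by rewrite ltrD2l.
have c2 : s - d1 <= s - m.+1%:R^-1 by rewrite lerD2l lerN2 ltW.
have hq1 := h2 (ratr q1) a1 (lt_trans b1 c1).
have hq2 := h1 (ratr q2) (le_lt_trans c2 a2) b2.
rewrite E -/L in hq2.
have : `|f (ratr q1) - f (ratr q2)| < ratr e.
  have -> : f (ratr q1) - f (ratr q2) = (L - f (ratr q2)) - (L - f (ratr q1)).
    by lra.
  apply: (le_lt_trans (ler_normB _ _)).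
  by rewrite (splitr (ratr e)); apply: ltrD.
by rewrite ltNge le12.
Qed.


Lemma rat_between a b : a < b -> exists q : rat, a < ratr q /\ ratr q < b.
Proof.
move=> ab.
have hne : `]a, b[%classic ((a + b) / 2) by rewrite /= in_itv /= !midf_lt.
have [r [/= + [q _ qr]]] := @dense_rat R `]a, b[%classic (ex_intro _ _ hne) (itv_open _ _).
by rewrite -qr in_itv /= => /andP[h1 h2]; exists q.
Qed.

Lemma osc_of_jump f s : cvg (f x @[x --> s^'-]) -> f x @[x --> s^'+] --> f s ->
  f s != lim (f x @[x --> s^'-]) -> osc f s.
Proof.
move=> cl cr ne.
set L := lim (f x @[x --> s^'-]) in ne.
have dd0 : 0 < `|f s - L| / 3 by rewrite divr_gt0 // normr_gt0 subr_eq0.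
have [e [e0 e1]] := rat_between dd0.
exists e; split => // m.
have [d1 d10 h1] := near_left_ex ((cvgrPdist_lt _ _).1 cl _ dd0).
have [d2 d20 h2] := near_right_ex ((cvgrPdist_lt _ _).1 cr _ dd0).
have mp : 0 < m.+1%:R^-1 :> R by rewrite invr_gt0 ltr0n.
set mi := m.+1%:R^-1 : R.
set d2' := Num.min d2 mi; set d1' := Num.min d1 mi.
have := lexx d2'; rewrite {2}/d2' le_min => /andP[d2d2 d2mi].
have := lexx d1'; rewrite {2}/d1' le_min => /andP[d1d1 d1mi].
have d2'0 : 0 < d2' by rewrite lt_min d20 mp.
have d1'0 : 0 < d1' by rewrite lt_min d10 mp.
have [q1 [a1 b1]] : exists q : rat, s < ratr q /\ ratr q < s + d2'.
  by apply: rat_between; rewrite ltrDl.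
have [q2 [a2 b2]] : exists q : rat, s - d1' < ratr q /\ ratr q < s.
  by apply: rat_between; rewrite gtrDl oppr_lt0.
exists q1, q2; split => //; try lra.
have hq1 := h2 (ratr q1) a1 ltac:(lra).
have hq2 := h1 (ratr q2) ltac:(lra) b2.
rewrite -/L in hq2.
have tri : `|f s - L| <= `|f s - f (ratr q1)| + `|f (ratr q1) - f (ratr q2)| + `|L - f (ratr q2)|.
  have -> : f s - L = (f s - f (ratr q1)) + (f (ratr q1) - f (ratr q2)) - (L - f (ratr q2)) by lra.
  apply: (le_trans (ler_normB _ _)); rewrite lerD2r; exact: ler_normD.
set D := `|f s - L| in dd0 e1 hq1 hq2 tri *.
set N := `|f (ratr q1) - f (ratr q2)| in tri *.
set A1 := `|f s - f (ratr q1)| in hq1 tri.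
set A2 := `|L - f (ratr q2)| in hq2 tri.
lra.
Qed.


Lemma countableU' (T : Type) (A B : set T) : countable A -> countable B ->
  countable (A `|` B).
Proof.
move=> cA cB.
have -> : A `|` B = \bigcup_(i in [set: bool]) (if i then A else B).
  apply/seteqP; split => x.
  - by case=> h; [exists true|exists false].
  - by case=> -[] _ h; [left|right].
apply: bigcup_countable; first exact: countableP.
by move=> [] _.
Qed.

Lemma osc_section_countable f a b (tw : R) : a <= b ->
  bounded_variation a b f ->
  countable [set c | a < tw + c /\ tw + c < b /\ osc f (tw + c)].
Proof.
move=> ab bv; have [g [h [ndg ndh fE]]] := bv_parts ab bv.
set D := [set x | x \in (`]a, b[) /\ discontinuity g x] `|`
         [set x | x \in (`]a, b[) /\ discontinuity h x].
have cD : countable D.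
  by apply: countableU'; exact: discontinuity_countable.
apply: (sub_countable _ cD).
apply: (card_le_trans _ (card_image_le (fun x => x - tw) D)).
apply: subset_card_le => c [h1 [h2 ho]].
exists (tw + c); last by rewrite addrC addKr.
have tin : tw + c \in `]a, b[ by rewrite in_itv /= h1 h2.
by case: (osc_disc ndg ndh fE h1 h2 ho) => H; [left|right].
Qed.

End path.


Section fub.
Context d (Omega : measurableType d) (R : realType) (P : probability Omega R).

Lemma exists_good_c (S : set (Omega * R)) : measurable S ->
  {ae P, forall w, countable (xsection S w)} ->
  forall a b : R, a < b -> exists c, a < c /\ c < b /\ P (ysection S c) = 0%E.
Proof.
move=> mS cS a b ab.
set A := S `&` (setT `*` `]a, b[%classic).
have mA : measurable A.
  apply: measurableI => //; apply: measurableX => //; exact: measurable_itv.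
have := @indic_fubini_tonelli _ _ _ _ R P (@lebesgue_measure R) A mA.
have FE := indic_fubini_tonelli_FE (@lebesgue_measure R) mA.
have GE := indic_fubini_tonelli_GE P mA.
have mF := indic_measurable_fun_fubini_tonelli_F (@lebesgue_measure R) mA.
have mG := indic_measurable_fun_fubini_tonelli_G P mA.
set F := fubini_F _ _ in FE mF *; set G := fubini_G _ _ in GE mG *.
have -> : (\int[P]_x F x = \int[P]_x (cst 0%E x))%E.
  apply: ae_eq_integral => //.
  apply: filterS cS => w cw _; rewrite FE /=.
  apply: countable_lebesgue_measure0.
  apply: (sub_countable _ cw); apply: subset_card_le => c [].
  by rewrite /xsection /= !inE => -[h _].
rewrite integral0 => /esym G0.
have G0' : (\int[lebesgue_measure]_x `|G x| = 0)%E.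
  rewrite -G0; apply: eq_integral => c _; rewrite gee0_abs //.
  by rewrite GE /=; exact: measure_ge0.
have := (ae_eq_integral_abs lebesgue_measure measurableT mG).1 G0'.
move=> [N [mN N0 sN]].
apply: contrapT => hc.
have sub : `]a, b[%classic `<=` N.
  move=> c /=; rewrite in_itv /= => /andP[ac cb]; apply: sN => /= hG.
  apply: hc; exists c; split => //; split => //.
  have := hG I; rewrite GE /= => <-; congr (P _).
  apply/seteqP; split => w; rewrite /ysection /= !inE.
  - by move=> h; split => //; split => //=; rewrite in_itv /= ac cb.
  - by move=> [].
have := @le_measure _ _ _ (@lebesgue_measure R) _ _ (mem_set (measurable_itv `]a, b[)) (mem_set mN) sub.
have N0le : (lebesgue_measure N <= 0)%E by rewrite N0.
move=> /le_trans /(_ N0le).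
move=> H.
have LE : lebesgue_measure (`]a, b[%classic : set R) = (b - a)%:E.
  by rewrite lebesgue_measure_itv /= lte_fin ab -EFinB.
have : ((b - a)%:E <= 0)%E by rewrite -LE; exact: H.
by rewrite lee_fin subr_le0 leNgt ab.
Qed.
End fub.


Section mset.
Context d (T0 : measurableType d) (R : realType).
Lemma mset_lt (u v : T0 -> R) : measurable_fun setT u -> measurable_fun setT v ->
  measurable [set x | u x < v x].
Proof.
move=> mu mv.
have : measurable (setT `&` (fun x => u x < v x) @^-1` [set true]).
  by apply: measurable_fun_ltr.
by rewrite setTI.
Qed.
Lemma mset_le (u v : T0 -> R) : measurable_fun setT u -> measurable_fun setT v ->
  measurable [set x | u x <= v x].
Proof.
move=> mu mv.
have : measurable (setT `&` (fun x => u x <= v x) @^-1` [set true]).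
  by apply: measurable_fun_ler.
by rewrite setTI.
Qed.
End mset.

Section oscS.
Context d (Omega : measurableType d) (R : realType).
Variables (tau : Omega -> R) (T : R).

Definition sfun (p : Omega * R) := tau p.1 + p.2.
Definition oscS (z : R) (Z : R -> Omega -> R) : set (Omega * R) :=
  [set p | 0 < sfun p /\ sfun p < T /\ osc (ext_path z Z p.1) (sfun p)].

Lemma oscS_meas z Z : measurable_fun setT tau ->
  (forall t, 0 <= t -> measurable_fun setT (Z t)) -> measurable (oscS z Z).
Proof.
move=> mtau mZ.
have ms : measurable_fun setT sfun.
  exact: measurable_funD (measurableT_comp mtau measurable_fst) measurable_snd.
have mg : forall q, measurable_fun setT (fun p : Omega * R => ext_path z Z p.1 q).
  move=> q; have [h|h] := boolP (q < 0).
    have -> : (fun p : Omega * R => ext_path z Z p.1 q) = fun=> z.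
      by apply: funext => p; rewrite /ext_path h.
    exact: measurable_cst.
  have -> : (fun p : Omega * R => ext_path z Z p.1 q) = Z q \o fst.
    by apply: funext => p; rewrite /ext_path (negbTE h).
  by apply: measurableT_comp measurable_fst; apply: mZ; rewrite leNgt.
set g := fun q1 q2 (p : Omega * R) => `|ext_path z Z p.1 (ratr q1) - ext_path z Z p.1 (ratr q2)|.
have mgg : forall q1 q2, measurable_fun setT (g q1 q2).
  move=> q1 q2; apply: measurableT_comp => //; exact: measurable_funB.
have -> : oscS z Z = [set p | 0 < sfun p] `&` [set p | sfun p < T] `&`
  \bigcup_(e : rat) ([set p : Omega * R | (0 : R) < ratr e] `&`
    \bigcap_(m : nat) \bigcup_(q1 : rat) \bigcup_(q2 : rat)
      ([set p | sfun p < ratr q1] `&` [set p | ratr q1 < sfun p + m.+1%:R^-1] `&`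
       [set p | sfun p - m.+1%:R^-1 < ratr q2] `&` [set p | ratr q2 < sfun p] `&`
       [set p | ratr e <= g q1 q2 p])).
  apply/seteqP; split => p.
  - move=> [h1 [h2 [e [e0 he]]]]; split; first by split.
    exists e => //; split => // m _.
    have [q1 [q2 [a1 a2 a3 a4 a5]]] := he m.
    by exists q1 => //; exists q2.
  - move=> [[h1 h2] [e _ [e0 he]]]; split => //; split => //.
    exists e; split => // m.
    have [q1 _ [q2 _ [[[[a1 a2] a3] a4] a5]]] := he m I.
    by exists q1, q2; split.
apply: measurableI; first apply: measurableI.
- by apply: mset_lt => //; exact: measurable_cst.
- by apply: mset_lt => //; exact: measurable_cst.
apply: bigcupT_measurable_rat => e; apply: measurableI.
  by apply: mset_lt; exact: measurable_cst.
apply: bigcapT_measurable => m.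
apply: bigcupT_measurable_rat => q1; apply: bigcupT_measurable_rat => q2.
repeat apply: measurableI.
- by apply: mset_lt => //; exact: measurable_cst.
- by apply: mset_lt; [exact: measurable_cst|exact: measurable_funD].
- by apply: mset_lt; [exact: measurable_funB|exact: measurable_cst].
- by apply: mset_lt => //; exact: measurable_cst.
- by apply: mset_le => //; exact: measurable_cst.
Qed.
End oscS.


Section det.
Context {Omega : Type} {R : realType}.

Lemma fin_tv (f : R -> R) b K : (total_variation (-1) b f <= K%:E)%E -> -1 <= b ->
  bounded_variation (-1) b f.
Proof.
move=> tv hb; apply/bounded_variationP => //.
rewrite ge0_fin_numE; last exact: total_variation_ge0.
exact: le_lt_trans tv (ltry K).
Qed.

Lemma jump_zero_of (z : R) (Z : R -> Omega -> R) w s T K : 0 < s -> s < T ->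
  (forall t, 0 <= t -> (fun u => Z u w) @ t^'+ --> Z t w) ->
  (forall b, (total_variation (-1) b (ext_path z Z w) <= K%:E)%E) ->
  ~ osc (ext_path z Z w) s -> jump z Z s w = 0.
Proof.
move=> s0 sT rc tv no.
set f := ext_path z Z w.
have m1T : -1 <= T by apply: ltW; apply: (lt_trans _ (lt_trans s0 sT)); rewrite ltrN10.
have bv := fin_tv (tv T) m1T.
have [g [h [ndg ndh fE]]] := bv_parts m1T bv.
have m1s : -1 < s by apply: lt_trans s0; rewrite ltrN10.
have [cl _ _] := bv_key ndg ndh fE m1s sT.
have eql : {near s^'-, f =1 (fun u => Z u w)}.
  near=> u; rewrite /f /ext_path ifF //; apply/negbTE; rewrite -leNgt.
  by apply: ltW; near: u; apply: nbhs_left_gt.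
have eqr : {near s^'+, f =1 (fun u => Z u w)}.
  near=> u; rewrite /f /ext_path ifF //; apply/negbTE; rewrite -leNgt.
  by apply: ltW; apply: lt_trans s0 _; near: u; apply: nbhs_right_gt.
have fs : f s = Z s w by rewrite /f /ext_path ifF //; apply/negbTE; rewrite -leNgt ltW.
have cr : f x @[x --> s^'+] --> f s.
  rewrite fs; apply: cvg_trans (rc s (ltW s0)).
  by apply: near_eq_cvg; near=> u; rewrite (near eqr u).
have LE : lim (f x @[x --> s^'-]) = lim ((fun u => Z u w) @ s^'-).
  by congr lim; apply/seteqP; split; apply: near_eq_cvg => //; near=> u; rewrite (near eql u).
rewrite /jump /left_val ifF; last by apply/negbTE; rewrite -ltNge.
apply/eqP; rewrite subr_eq0; apply/negPn/negP => ne.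
apply: no; apply: osc_of_jump => //.
by move: ne; rewrite -fs -LE.
Unshelve. all: by end_near. Qed.
End det.


Unset Implicit Arguments.

Theorem lemmaB1 (d : measure_display) (Omega : measurableType d) (R : realType)
    (P : probability Omega R) (F : R -> set (set Omega)) (T x y : R)
    (X Y : R -> Omega -> R) (tau : Omega -> R) :
  0 < T -> filtration P F ->
  procX P F x T X -> procX P F y T Y ->
  stopping_time F tau -> (forall w, tau w <= T) ->
  exists taun : nat -> Omega -> R,
    [/\ (forall n, stopping_time F (taun n)),
        (forall n w, tau w <= taun n w <= T),
        {ae P, forall w, tau w < T ->
            nonincreasing_seq (fun n => taun n w) /\
            (fun n => taun n w) @ \oo --> tau w} &
        (forall n, {ae P, forall w, taun n w < T ->
            jump x X (taun n w) w = 0 /\ jump y Y (taun n w) w = 0})].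
Proof.
move=> T0 [sF Fm Fmono Frc F0] [adX rcX bX [KX tvX] zX] [adY rcY bY [KY tvY] zY] st tT.
have mtau : measurable_fun setT tau by apply: tau_meas Fm st.
have mZ : forall (Z : R -> Omega -> R), (forall t, 0 <= t -> forall B : set R, measurable B -> F t (Z t @^-1` B)) ->
    forall t, 0 <= t -> measurable_fun setT (Z t).
  move=> Z adZ t t0 _ B mB; rewrite setTI; exact: Fm _ t0 _ (adZ t t0 B mB).
set S := oscS tau T x X `|` oscS tau T y Y.
have mS : measurable S.
  by apply: measurableU; apply: oscS_meas => //; apply: mZ.
have m1T : -1 <= T by apply: ltW; apply: lt_trans T0; rewrite ltrN10.
have cS : {ae P, forall w, countable (xsection S w)}.
  apply: filterS2 tvX tvY => w hX hY.
  have -> : xsection S w = xsection (oscS tau T x X) w `|` xsection (oscS tau T y Y) w.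
    by apply/seteqP; split => c; rewrite /xsection /= !inE.
  apply: countableU'.
  - apply: (sub_countable _ (osc_section_countable (tau w) m1T (fin_tv (hX T) m1T))).
    apply: subset_card_le => c; rewrite /xsection /= inE /oscS /sfun /= => -[h1 [h2 h3]].
    by split => //; apply: lt_trans h1; rewrite ltrN10.
  - apply: (sub_countable _ (osc_section_countable (tau w) m1T (fin_tv (hY T) m1T))).
    apply: subset_card_le => c; rewrite /xsection /= inE /oscS /sfun /= => -[h1 [h2 h3]].
    by split => //; apply: lt_trans h1; rewrite ltrN10.
have goodc := exists_good_c mS cS.
have : forall n : nat, exists c : R, (n.+2%:R^-1 < c /\ c < n.+1%:R^-1) /\ P (ysection S c) = 0%E.
  move=> n; have [|c [h1 [h2 h3]]] := goodc n.+2%:R^-1 n.+1%:R^-1.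
    by rewrite ltf_pV2 ?posrE ?ltr0n // ltr_nat.
  by exists c.
move=> /choice [c hc].
have cpos : forall n, 0 < c n.
  move=> n; apply: lt_trans (hc n).1.1; by rewrite invr_gt0 ltr0n.
have cmono : forall n m, (n <= m)%N -> c m <= c n.
  move=> n m; rewrite leq_eqVlt => /orP[/eqP->//|nm].
  apply/ltW; apply: (lt_trans (hc m).1.2); apply: le_lt_trans (hc n).1.1.
  by rewrite lef_pV2 ?posrE ?ltr0n // ler_nat.
exists (fun n w => Num.min (tau w + c n) T); split.
- move=> n; split.
    move=> w; rewrite le_min andbC (_ : 0 <= T) ?(ltW T0) //=; apply: addr_ge0; first exact: st.1.
    exact: ltW.
  move=> t t0; have [Tt|tT'] := leP T t.
    have -> : [set w | Num.min (tau w + c n) T <= t] = setT.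
      by apply/seteqP; split => // w _; rewrite /= ge_min Tt orbT.
    have [h0 hC _] := sF t t0; rewrite -(setD0 setT); exact: hC.
  have -> : [set w | Num.min (tau w + c n) T <= t] = [set w | tau w <= t - c n].
    apply/seteqP; split => w; rewrite /= ge_min (leNgt T t) tT' orbF.
      by rewrite lerBrDr.
    by rewrite lerBrDr.
  have [h|h] := leP 0 (t - c n).
    apply: (Fmono (t - c n) t h); first by rewrite lerBlDr lerDl (ltW (cpos n)).
    by case: st => _; apply.
  have -> : [set w | tau w <= t - c n] = set0.
    apply/seteqP; split => w //= hw.
    have := le_trans (st.1 w) hw; by rewrite leNgt h.
  by have [h0 _ _] := sF t t0.
- move=> n w; rewrite ge_min lexx orbT andbT le_min tT andbT.
  by rewrite lerDl (ltW (cpos n)).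
- apply: aeW => w tw; split.
    move=> n m nm /=; rewrite le_min !ge_min lexx !orbT !andbT.
    by rewrite lerD2l cmono.
  apply/cvgrPdist_lt => e e0.
  apply: filterS (near_infty_natSinv_lt (PosNum e0)) => n hn /=.
  have h1 : tau w <= Num.min (tau w + c n) T by rewrite le_min tT andbT lerDl (ltW (cpos n)).
  have h2 : Num.min (tau w + c n) T <= tau w + c n by rewrite ge_min lexx.
  rewrite ler0_norm ?subr_le0 // opprB.
  apply: (@le_lt_trans _ _ (c n)); first lra.
  exact: lt_trans (hc n).1.2 hn.
- move=> n.
  have yS0 : {ae P, forall w, ~ ysection S (c n) w}.
    exists (ysection S (c n)); split => //; first exact: measurable_ysection.
      exact: (hc n).2.
    by move=> w /= /contrapT.
  near=> w => hw.
  have := hw; rewrite gt_min ltxx orbF => hw'.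
  rewrite min_l; last exact: ltW.
  have s0 : 0 < tau w + c n by rewrite ltr_pwDr // (st.1 w).
  have nS : ~ ysection S (c n) w by near: w.
  have hrX : forall t, 0 <= t -> (fun u => X u w) @ t^'+ --> X t w by near: w.
  have htX : forall b, (total_variation (-1) b (ext_path x X w) <= KX%:E)%E by near: w.
  have hrY : forall t, 0 <= t -> (fun u => Y u w) @ t^'+ --> Y t w by near: w.
  have htY : forall b, (total_variation (-1) b (ext_path y Y w) <= KY%:E)%E by near: w.
  split.
  - apply: (jump_zero_of s0 hw' hrX htX).
    move=> ho; apply: nS; rewrite /ysection /= inE; left.
    by rewrite /oscS /sfun /=; split => //; split.
  - apply: (jump_zero_of s0 hw' hrY htY).
    move=> ho; apply: nS; rewrite /ysection /= inE; right.
    by rewrite /oscS /sfun /=; split => //; split.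
Unshelve. all: by end_near. Qed.
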